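(* Let $\mathbb{X},\mathbb{Y}$ be Banach spaces, $\varphi:\mathbb{X}\to\mathbb{Y}$ a mapping and $\bar x\in\mathbb{X}$. Suppose that $\varphi$ is Fréchet differentiable at $\bar x$, with derivative $\nabla\varphi(\bar x)$, and that there exist $\kappa,r>0$ such that $$\mathbf{d}(\bar x,\varphi^{-1}(y))\le \kappa\,\|\varphi(\bar x)-y\|\quad\text{for all } y\in\mathbb{Y}\text{ with }\|y-\varphi(\bar x)\|<r.$$ Then $\nabla\varphi(\bar x)(\mathbb{X})$ is a closed linear subspace of $\mathbb{Y}$.
   Context: For a subset $D$ of a normed space, $\mathbf{d}(x,D):=\inf\{\|x-y\|:y\in D\}$ (with $\inf\emptyset=+\infty$), and $\varphi^{-1}(y):=\{x\in\mathbb{X}:\varphi(x)=y\}$. *)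

(* Defs.v *)
From HB Require Import structures.
From mathcomp Require Import all_boot all_order all_algebra.
From mathcomp Require Import all_classical all_reals all_analysis.
Set Implicit Arguments. Unset Strict Implicit. Unset Printing Implicit Defensive.
Import Order.TTheory GRing.Theory Num.Theory.
Import numFieldNormedType.Exports.
Local Open Scope classical_set_scope.
Local Open Scope ring_scope.

(* d(x, D) := inf { ||x - y|| : y in D }, valued in the extended reals,
   so that d(x, emptyset) = +oo. *)
Definition dist_set (R : realType) (X : normedModType R) (x : X) (D : set X)
  : \bar R := ereal_inf [set (`|x - y|)%:E | y in D].

(* Main.v *)
Require Import Defs.
From HB Require Import structures.
From mathcomp Require Import all_boot all_order all_algebra.
From mathcomp Require Import all_classical all_reals all_analysis.
Import Order.TTheory GRing.Theory Num.Theory.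
Import numFieldNormedType.Exports.
Local Open Scope classical_set_scope.
Local Open Scope ring_scope.

From mathcomp Require Import lra.
Lemma diff_eps (R:realType) (X Y: normedModType R) (f : X -> Y) x :
  differentiable f x -> forall e, 0 < e -> exists2 d, 0 < d &
  forall h, `|h| < d -> `|f (x + h) - f x - 'd f x h| <= e * `|h|.
Proof.
move=> df e e0.
have := diff_locally df.
set o := [o_ _ _ of _] => E.
have oP := littleoP o.
have := oP e e0 => /nbhs_norm0P [d d0 Hd].
exists d => // h hd.
have Eh := congr1 (fun g => g h) E; rewrite /= /shift /= in Eh.
rewrite (addrC x h) Eh.
have -> : f x + 'd f x h + o h - f x - 'd f x h = o h by rewrite -addrA -opprD addrAC subrr add0r.

exact: Hd.
Qed.



Lemma approx (R : realType) (X Y : normedModType R)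
  (phi : X -> Y) (xbar : X) (kappa r : R) :
  differentiable phi xbar ->
  0 < kappa -> 0 < r ->
  (forall y : Y, `|y - phi xbar| < r ->
     (dist_set xbar (phi @^-1` [set y]) <= (kappa * `|phi xbar - y|)%:E)%E) ->
  forall v, exists u, `|u| <= 2 * kappa * `|v| /\ `|v - 'd phi xbar u| <= `|v| / 2.
Proof.
move=> dphi k0 r0 Hreg.
have e0 : 0 < (4 * kappa)^-1 by rewrite invr_gt0 mulr_gt0.
have [d d0 Hd] := @diff_eps _ _ _ _ _ dphi _ e0.
move=> v.
have [->|vn0] := eqVneq v 0.
  by exists 0; rewrite linear0 !normr0 subr0 normr0 mulr0 mul0r.
set nv := `|v|.
have nv0 : 0 < nv by rewrite normr_gt0.
set t := Num.min (r / (2 * nv)) (d / (4 * kappa * nv)).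
have t0 : 0 < t by rewrite lt_min !divr_gt0 ?mulr_gt0.
have ht1 : t * nv < r.
  have : t <= r / (2 * nv) by rewrite ge_min lexx.
  rewrite ler_pdivlMr ?mulr_gt0 // => H; nra.
have ht2 : 2 * kappa * (t * nv) < d.
  have : t <= d / (4 * kappa * nv) by rewrite ge_min lexx orbT.
  rewrite ler_pdivlMr ?mulr_gt0 // => H; nra.
set y := phi xbar + t *: v.
have hy : `|y - phi xbar| = t * nv by rewrite /y addrC addKr normrZ gtr0_norm.
have hy' : `|phi xbar - y| = t * nv by rewrite distrC.
have := Hreg y; rewrite hy hy' => /(_ ht1) Hd2.
have : (dist_set xbar (phi @^-1` [set y]) < (2 * kappa * (t * nv))%:E)%E.
  have tn0 : 0 < t * nv by rewrite mulr_gt0.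
  apply: le_lt_trans Hd2 _; rewrite lte_fin; nra.
move=> /ereal_inf_lt [z [x' Hx' <-]]; rewrite lte_fin => Hx.
have Ey : phi x' = y := Hx'.
set h := x' - xbar.
have hh : `|h| < 2 * kappa * (t * nv) by rewrite /h distrC.
have := Hd h (lt_trans hh ht2).
rewrite /h [xbar + _]addrC subrK Ey.
have -> : y - phi xbar = t *: v by rewrite /y addrC addKr.
rewrite -/h => Hn.
exists (t^-1 *: h); split.
  rewrite normrZ gtr0_norm ?invr_gt0 // mulrC ler_pdivrMr //; nra.
have -> : v - 'd phi xbar (t^-1 *: h) = t^-1 *: (t *: v - 'd phi xbar h).
  by rewrite linearZ scalerBr scalerA mulVf ?gt_eqF // scale1r.
rewrite normrZ gtr0_norm ?invr_gt0 // mulrC ler_pdivrMr //.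
apply: le_trans Hn _.
rewrite mulrC ler_pdivrMr ?mulr_gt0 //; nra.
Qed.
Lemma surj_iter (R : realType) (X : completeNormedModType R) (Y : normedModType R)
  (A : {linear X -> Y}) (C : R) : continuous A -> 0 <= C ->
  (forall v, exists u, `|u| <= C * `|v| /\ `|v - A u| <= `|v| / 2) ->
  forall v, exists s, A s = v.
Proof.
move=> Acont C0 H v.
have [g Hg] := boolp.choice H.
pose vs n := iter n (fun w => w - A (g w)) v.
pose u k := g (vs k).
have vsn n : `|vs n| <= geometric `|v| (2^-1) n.
  elim: n => [|n IH]; first by rewrite /= expr0 mulr1.
  rewrite /vs iterS -/(vs n) /=.
  apply: le_trans (proj2 (Hg _)) _.
  rewrite exprSr mulrA ler_pM2r //.
have un k : `|u k| <= geometric (C * `|v|) (2^-1) k.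
  rewrite /= -mulrA; apply: le_trans (proj1 (Hg _)) _.
  exact: ler_wpM2l.
have cu : cvgn (series u).
  apply: normed_cvg.
  apply: (@series_le_cvg _ _ (geometric (C * `|v|) (2^-1))) => //.
  - by move=> n /=.
  - by move=> n; apply: geometric_ge0; rewrite ?mulr_ge0.
  - apply: is_cvg_geometric_series.
    by rewrite ger0_norm // invf_lt1 // ltr1n.
have Aser n : A (series u n) = v - vs n.
  elim: n => [|n IH].
    by rewrite /series /= big_geq // linear0 subrr.
  rewrite seriesSr linearD IH /vs iterS -/(vs n) /u.
  by rewrite opprB addrA addrAC.
have hs : series u @ \oo --> limn (series u) := cu.
have h1 : (A \o series u) @ \oo --> A (limn (series u)) by apply: continuous_cvg => //; exact: Acont.
have h2 : (A \o series u) @ \oo --> v.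
  have -> : A \o series u = (fun n => v - vs n) by apply: funext => n /=.
  rewrite -[v in _ --> v]subr0; apply: cvgB; first exact: cvg_cst.
  apply/cvgr0Pnorm_lt => e e0.
  have hg : geometric `|v| (2^-1 : R) @ \oo --> 0.
    by apply: cvg_geometric; rewrite ger0_norm // invf_lt1 // ltr1n.
  have H' := cvgr0_norm_lt _ hg _ e0.
  near=> n; apply: le_lt_trans (vsn n) _.
  rewrite -[X in X < _]ger0_norm ?mulr_ge0 ?exprn_ge0 //.
  near: n; apply: H'; exact: _.
exists (limn (series u)); exact: (cvg_unique _ h1 h2).
Unshelve. all: by end_near. Qed.

Theorem proposition3p1 (R : realType) (X Y : completeNormedModType R)
  (phi : X -> Y) (xbar : X) (kappa r : R) :
  differentiable phi xbar ->
  0 < kappa -> 0 < r ->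
  (forall y : Y, `|y - phi xbar| < r ->
     (dist_set xbar (phi @^-1` [set y]) <= (kappa * `|phi xbar - y|)%:E)%E) ->
  closed (range ('d phi xbar)).
Proof.
move=> dphi k0 r0 Hreg.
have Hap := @approx R X Y phi xbar kappa r dphi k0 r0 Hreg.
have k2 : 0 <= 2 * kappa by rewrite mulr_ge0 // ltW.
have -> : range ('d phi xbar) = setT.
  apply/seteqP; split => // w _.
  have [s Hs] := @surj_iter R X Y ('d phi xbar) (2 * kappa) (diff_continuous dphi) k2 Hap w.
  by exists s.
exact: closedT.
Qed.
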